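(* Let $H$ be a non-complete, connected, regular graph. For every $G\in\operatorname{obs}^\ast(H)$ there are distinct vertices $u,v\in V(G)$ that are true twins in $G$ (i.e., $N_G[u]=N_G[v]$) and satisfy $G-u\cong H\cong G-v$.
   Context: All graphs are finite, simple and loopless. $N[x]$ denotes the closed neighbourhood of $x$. A full-homomorphism $\varphi\colon G\to H$ is a map $V(G)\to V(H)$ such that for all $x,y\in V(G)$, $xy\in E(G)$ if and only if $\varphi(x)\varphi(y)\in E(H)$. A full $H$-colouring of $G$ is a full-homomorphism $G\to H$. A minimal $H$-obstruction is a graph $G$ that admits no full $H$-colouring while every proper induced subgraph of $G$ admits one; $\operatorname{obs}(H)$ denotes the set of minimal $H$-obstructions (up to isomorphism), and $\operatorname{obs}^\ast(H)$ the set of minimal $H$-obstructions on exactly $|V(H)|+1$ vertices. *)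

(* Defs.v *)
From mathcomp Require Import all_boot.
Set Implicit Arguments. Unset Strict Implicit. Unset Printing Implicit Defensive.

Definition simple_graph (V : finType) (e : rel V) : Prop :=
  symmetric e /\ irreflexive e.

Definition full_hom (A B : finType) (eA : rel A) (eB : rel B) (phi : A -> B) : Prop :=
  forall x y, eA x y = eB (phi x) (phi y).

Definition full_colourable (A B : finType) (eA : rel A) (eB : rel B) : Prop :=
  exists phi : A -> B, full_hom eA eB phi.

Definition induced (V : finType) (e : rel V) (S : {set V}) : rel {x : V | x \in S} :=
  fun x y => e (val x) (val y).
Arguments induced {V} e S.

Definition minimal_obstruction (V W : finType) (eG : rel V) (eH : rel W) : Prop :=
  ~ full_colourable eG eH /\
  forall S : {set V}, S != setT -> full_colourable (induced eG S) eH.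

Definition regular (W : finType) (e : rel W) : Prop :=
  exists k, forall x : W, #|[set y | e x y]| = k.

Definition connected_graph (W : finType) (e : rel W) : Prop :=
  forall x y : W, connect e x y.

Definition complete_graph (W : finType) (e : rel W) : Prop :=
  forall x y : W, x != y -> e x y.

Definition closed_nbhd (V : finType) (e : rel V) (x : V) : {set V} :=
  [set y | (y == x) || e x y].

Definition isomorphic (A B : finType) (eA : rel A) (eB : rel B) : Prop :=
  exists g : A -> B, bijective g /\ forall x y, eA x y = eB (g x) (g y).

Definition delete_vertex (V : finType) (e : rel V) (u : V) :=
  induced e [set x | x != u].
Arguments delete_vertex {V} e u.

(* Main.v *)
Require Import Defs.
From mathcomp Require Import all_boot zify.
From Stdlib Require Import Classical_Prop.
Set Implicit Arguments. Unset Strict Implicit. Unset Printing Implicit Defensive.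

Definition deg (V : finType) (e : rel V) (x : V) := #|[set y | e x y]|.

Lemma no_false_twins (W V : finType) (eH : rel W) (eG : rel V) :
  simple_graph eH -> simple_graph eG -> minimal_obstruction eG eH ->
  forall p q : V, p != q -> ~~ eG p q ->
  (forall z, z != p -> z != q -> eG p z = eG q z) -> False.
Proof.
move=> [sH iH] [sG iG] [nc mo] p q pq npq tw.
have Sn : [set y | y != p] != setT.
  by apply/eqP => /setP /(_ p); rewrite !inE eqxx.
case: (mo _ Sn) => chi hchi.
have q0 : q \in [set y | y != p] by rewrite inE eq_sym.
pose Q := (exist _ q q0 : {x | x \in [set y | y != p]}).
apply: nc; exists (fun y => chi (insubd Q y)) => y z.
rewrite -hchi /induced !val_insubd !inE /=.
case: (eqVneq y p) => [->|yp]; case: (eqVneq z p) => [->|zp] //=.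
- by rewrite !iG.
- case: (eqVneq z q) => [->|zq]; first by rewrite iG; exact/negbTE.
  exact: tw.
- rewrite (sG y p) (sG y q). case: (eqVneq y q) => [->|yq]; first by rewrite iG; exact/negbTE.
  exact: tw.
Qed.

Definition bad (V : finType) (e : rel V) (x a b : V) :=
  [/\ e a x, ~~ e b x, a != x, b != x & forall z, z != x -> e a z = e b z].

Lemma good_or_bad (W V : finType) (eH : rel W) (eG : rel V) :
  simple_graph eH -> simple_graph eG -> minimal_obstruction eG eH ->
  #|V| = #|W|.+1 ->
  forall x, isomorphic (delete_vertex eG x) eH \/ exists a b, bad eG x a b.
Proof.
move=> sH sG mo card x.
have [_ iH] := sH; have [syG iG] := sG; have [nc mo'] := mo.
set S := [set y | y != x].
have Sn : S != setT by apply/eqP => /setP /(_ x); rewrite !inE eqxx.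
case: (mo' _ Sn) => phi hphi.
case: (boolP [exists p, exists q, (p != q) && (phi p == phi q)]).
- move=> /existsP [p /existsP [q /andP [pq /eqP fpq]]].
  have tw : forall z, z != x -> eG (val p) z = eG (val q) z.
    move=> z zx; have zS : z \in S by rewrite inE.
    have := hphi p (exist _ z zS); have := hphi q (exist _ z zS).
    by rewrite /induced /= fpq => -> ->.
  have npq : eG (val p) (val q) = false.
    by have := hphi p q; rewrite /induced fpq iH.
  have px : val p != x by have := valP p; rewrite inE.
  have qx : val q != x by have := valP q; rewrite inE.
  have vpq : val p != val q by rewrite val_eqE.
  case: (boolP (eG (val p) x)) => hp; case: (boolP (eG (val q) x)) => hq.
  + exfalso; apply: (no_false_twins sH sG mo vpq); first by rewrite npq.
    move=> z _ _; case: (eqVneq z x) => [->|zx]; first by rewrite hp hq.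
    exact: tw.
  + by right; exists (val p), (val q); split.
  + right; exists (val q), (val p); split => // z zx; by rewrite tw.
  + exfalso; apply: (no_false_twins sH sG mo vpq); first by rewrite npq.
    move=> z _ _; case: (eqVneq z x) => [->|zx]; first by rewrite (negbTE hp) (negbTE hq).
    exact: tw.
- move=> Hn; left.
  have inj : injective phi.
    move=> p q fpq; apply/eqP; apply: contraNT Hn => pq.
    by apply/existsP; exists p; apply/existsP; exists q; rewrite pq fpq eqxx.
  exists phi; split; last exact: hphi.
  apply: inj_card_bij inj _.
  rewrite card_sig.
  have -> : #|[pred y | y \in S]| = #|[set~ x]|.
    by apply: eq_card => y; rewrite !inE.
  by rewrite cardsC1 card.
Qed.

Lemma badE (V : finType) (e : rel V) x a b :
  bad e x a b -> forall z, e a z = (z == x) || e b z.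
Proof.
case=> hax _ _ _ tw z; case: (eqVneq z x) => [->|zx] //=; exact: tw.
Qed.

Lemma bad_neq (V : finType) (e : rel V) x a b : bad e x a b -> a != b.
Proof. by case=> hax hbx _ _ _; apply: contraNneq hbx => <-. Qed.

Lemma deg_bad (V : finType) (e : rel V) x a b :
  bad e x a b -> deg e a = (deg e b).+1.
Proof.
move=> hb; rewrite /deg.
have -> : [set y | e a y] = x |: [set y | e b y].
  by apply/setP => z; rewrite !inE (badE hb).
by case: hb => _ hbx _ _ _; rewrite cardsU1 inE hbx.
Qed.

Lemma key (V : finType) (e : rel V) v a b a' b' :
  simple_graph e -> bad e v a b -> bad e b a' b' -> b' = v.
Proof.
move=> [sy ir] h1 h2.
have E1 := badE h1; have E2 := badE h2.
have ea'b : e a' b by case: h2.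
have eaa' : e a a' by rewrite E1 sy ea'b orbT.
have eb'a : e b' a by move: eaa'; rewrite sy E2 (negbTE (bad_neq h1)).
move: eb'a; rewrite sy E1 sy.
case: h2 => _ nb _ _ _; rewrite (negbTE nb) orbF => /eqP //.
Qed.

Lemma exists_good (W V : finType) (eH : rel W) (eG : rel V) :
  simple_graph eH -> simple_graph eG -> minimal_obstruction eG eH ->
  #|V| = #|W|.+1 -> exists x, isomorphic (delete_vertex eG x) eH.
Proof.
move=> sH sG mo card.
have : 0 < #|V| by rewrite card.
case/card_gt0P => v0 _.
case: (arg_maxnP (deg eG) (erefl true : predT v0)) => v _ vmax.
case: (good_or_bad sH sG mo card v) => [g|[a [b hb]]]; first by exists v.
case: (good_or_bad sH sG mo card b) => [g|[a' [b' hb']]]; first by exists b.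
have ev := key sG hb hb'. subst b'.
have := vmax a' isT; by rewrite (deg_bad hb') /= ltnn.
Qed.

Lemma card_pre (A B : finType) (f : A -> B) (P : pred B) :
  injective f -> #|[set a | P (f a)]| = #|[set b | (b \in codom f) && P b]|.
Proof.
move=> fi; rewrite -(card_imset _ fi); apply: eq_card => b.
rewrite inE; apply/imsetP/andP.
- by case=> a; rewrite inE => Pa ->; split; [exact: codom_f|].
- by case=> /codomP [a ->] Pa; exists a; rewrite ?inE.
Qed.

Lemma good_deg (W V : finType) (eH : rel W) (eG : rel V) x k :
  simple_graph eG -> isomorphic (delete_vertex eG x) eH ->
  (forall w, #|[set z | eH w z]| = k) ->
  forall y, y != x -> deg eG y = k + eG y x.
Proof.
move=> [sy ir] [g [gb hg]] hk y yx.
have -> : deg eG y = #|[set z | eG y z && (z != x)]| + eG y x.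
  rewrite /deg; case: (boolP (eG y x)) => hyx.
  - have -> : [set z | eG y z] = x |: [set z | eG y z && (z != x)].
      apply/setP => z; rewrite !inE; case: (eqVneq z x) => [->|] //=.
      by rewrite andbT.
    by rewrite cardsU1 inE eqxx andbF addnC.
  - rewrite addn0; apply: eq_card => z; rewrite !inE.
    by case: (eqVneq z x) => [->|]; rewrite ?(negbTE hyx) ?andbT.
congr (_ + _).
have yS : y \in [set z | z != x] by rewrite inE.
pose Y := (exist _ y yS : {z | z \in [set z | z != x]}).
rewrite -(hk (g Y)).
have gi := bij_inj gb.
transitivity #|[set a | eH (g Y) (g a)]|; last first.
  rewrite (card_pre (eH (g Y)) gi); apply: eq_card => w; rewrite !inE.
  have -> // : w \in codom g.
  by case: gb => h gh hg'; rewrite -[w]hg'; exact: codom_f.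
have -> : [set a | eH (g Y) (g a)] = [set a | eG y (val a)].
  by apply/setP => a; rewrite !inE -hg.
rewrite (card_pre (eG y) val_inj).
apply: eq_card => z; rewrite !inE andbC; congr (_ && _).
apply/idP/idP.
- move=> zx; have zS : z \in [set z | z != x] by rewrite inE.
  by apply/codomP; exists (exist _ z zS).
- by case/codomP => s ->; have := valP s; rewrite inE.
Qed.

Lemma reg1_complete (W : finType) (eH : rel W) :
  simple_graph eH -> connected_graph eH ->
  (forall w, #|[set z | eH w z]| = 1) -> complete_graph eH.
Proof.
move=> [sy ir] con h1.
have un : forall u v v', eH u v -> eH u v' -> v = v'.
  move=> u v v'; have /cards1P [c hc] : #|[set z | eH u z]| == 1 by rewrite h1.
  move=> hv hv'.
  have : v \in [set z | eH u z] by rewrite inE.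
  have : v' \in [set z | eH u z] by rewrite inE.
  by rewrite hc !inE => /eqP -> /eqP ->.
move=> w1 w2 w12.
have : 0 < #|[set z | eH w1 z]| by rewrite h1.
case/card_gt0P => c; rewrite inE => hc.
pose a := [pred z | (z == w1) || (z == c)].
have cl : closed eH a.
  move=> u v huv; rewrite !inE.
  case: (eqVneq u w1) => [eu|nu].
    by subst u; rewrite (un _ _ _ huv hc) eqxx orbT.
  case: (eqVneq u c) => [eu|nc].
    subst u; have hcw : eH c w1 by rewrite sy.
    by rewrite (un _ _ _ huv hcw) eqxx.
  rewrite /=; apply/esym/negbTE; apply/orP; case=> /eqP ev; subst v.
  - by move: nc; rewrite (un _ _ _ hc (_ : eH w1 u)) ?eqxx // sy.
  - have hcw : eH c w1 by rewrite sy.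
    by move: nu; rewrite (un _ _ _ (_ : eH c u) hcw) ?eqxx // sy.
have := closed_connect cl (con w1 w2); rewrite !inE eqxx /= eq_sym (negbTE w12) /= => /esym /eqP ->; exact: hc.
Qed.

Lemma regfull_complete (W : finType) (eH : rel W) k :
  simple_graph eH -> (forall w, #|[set z | eH w z]| = k) -> k.+1 = #|W| ->
  complete_graph eH.
Proof.
move=> [sy ir] hk hn w1 w2 w12.
have : [set z | eH w1 z] == [set~ w1].
  rewrite eqEcard cardsC1 hk -hn /= leqnn andbT.
  by apply/subsetP => z; rewrite !inE; apply: contraTneq => ->; rewrite ir.
by move/eqP/setP/(_ w2); rewrite !inE eq_sym w12.
Qed.

Theorem lemma3p3 (W : finType) (eH : rel W) (V : finType) (eG : rel V) :
  simple_graph eH -> ~ complete_graph eH -> connected_graph eH -> regular eH ->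
  simple_graph eG -> #|V| = #|W|.+1 -> minimal_obstruction eG eH ->
  exists u v : V,
    [/\ u != v, closed_nbhd eG u = closed_nbhd eG v,
        isomorphic (delete_vertex eG u) eH & isomorphic (delete_vertex eG v) eH].
Proof.
move=> sH nc con [k hk] sG card mo.
have [x gx] := exists_good sH sG mo card.
have dx := good_deg sG gx hk.
have [sy ir] := sG.
case: (classic (exists y, y != x /\ isomorphic (delete_vertex eG y) eH)) => [[y [yx gy]]|nog].
  have dy := good_deg sG gy hk.
  have xy : x != y by rewrite eq_sym.
  have tw : forall z, z != x -> z != y -> eG x z = eG y z.
    move=> z zx zy; have := dx z zx; rewrite dy // => /addnI.
    by rewrite (sy x) (sy y); case: (eG z y); case: (eG z x).
  have exy : eG x y.
    by apply/negPn/negP => nxy; exact: (no_false_twins sH sG mo xy nxy tw).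
  exists x, y; split => //.
  apply/setP => z; rewrite /closed_nbhd !inE.
  case: (eqVneq z x) => [->|zx]; first by rewrite sy exy orbT.
  case: (eqVneq z y) => [->|zy]; first by rewrite exy.
  by rewrite /= tw.
exfalso.
have Wn : 0 < #|W|.
  case: (pickP (@predT W)) => [w _|h]; first by apply/card_gt0P; exists w.
  by exfalso; apply: nc => a; have := h a.
have [y0 y0x] : exists y, y != x.
  have : 0 < #|[set~ x]| by rewrite cardsC1 card.
  by case/card_gt0P => y; rewrite !inE => ?; exists y.
have cases : forall y, y != x ->
    (deg eG x = k.+1 /\ eG x y) \/ ((deg eG x).+1 = k /\ ~~ eG x y).
  move=> y yx.
  case: (good_or_bad sH sG mo card y) => [gy|[a [b hb]]].
    by exfalso; apply: nog; exists y.
  have db := deg_bad hb.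
  have ab := bad_neq hb.
  have xy : x != y by rewrite eq_sym.
  case: hb => hay hby ay by_ tw.
  case: (eqVneq a x) => [ax|ax].
    subst a; left; split => //.
    have bx : b != x by rewrite eq_sym.
    rewrite db dx // sy tw // ir addn0 //.
  case: (eqVneq b x) => [bx|bx].
    subst b; right; split => //.
    move: db; rewrite dx // tw // ir addn0 => <- //.
  exfalso; move: db; rewrite (dx a ax) (dx b bx) (tw x xy); lia.
case: (cases y0 y0x) => [[dk _]|[dk _]].
  have all : forall y, y != x -> eG x y.
    by move=> y yx; case: (cases y yx) => [[]//|[dk' _]]; exfalso; lia.
  have : deg eG x = #|W|.
    rewrite /deg; have -> : [set z | eG x z] = [set~ x].
      apply/setP => z; rewrite !inE; case: (eqVneq z x) => [->|zx].
        by rewrite ir.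
      by rewrite all.
    by rewrite cardsC1 card.
  rewrite dk => hn; apply: nc; exact: (regfull_complete sH hk hn).
have none : forall y, y != x -> ~~ eG x y.
  by move=> y yx; case: (cases y yx) => [[dk' _]|[]//]; exfalso; lia.
have : deg eG x = 0.
  rewrite /deg; have -> : [set z | eG x z] = set0.
    apply/setP => z; rewrite !inE; case: (eqVneq z x) => [->|zx].
      by rewrite ir.
    exact/negbTE/none.
  by rewrite cards0.
move=> d0; rewrite d0 in dk; subst k.
apply: nc; exact: (reg1_complete sH con hk).
Qed.
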